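(* Let $m\ge0$ and $q\in\{1,3\}$. Let $\theta:\widetilde H\to\mathbb T$ be given by $\theta(X)=\theta(Y)=1$, $\theta(z)=z^4$ for $z\in\mathbb T$, and $\psi:\widetilde H\to\mathbb T$ by $\psi(X)=-i$, $\psi(Y)=1$, $\psi(\mathbb T)=1$. Then the kernel of $2^m\theta+q\psi$ is generated by $\exp(\pi i q/2^{m+3})X$ and $Y$, and is isomorphic to $H(m,q)$.
   Context: $\mathbb T=\{z\in\mathbb C:|z|=1\}$. $\widetilde H$ is the compact Lie group with presentation $\langle X,Y,\mathbb T\mid X^4=Y^8=1,\ [\mathbb T,\widetilde H]=1,\ [X,\widetilde H']=1,\ [Y,[Y,X]]=i\rangle$. Homomorphisms to $\mathbb T$ are written additively: $(a\theta+b\psi)(g)=\theta(g)^a\psi(g)^b$. $H(m,q)$ is the group $\langle A,B\mid A^{2^{m+4}}=B^8=1,\ [A^4,H]=1,\ [A,H']=1,\ [B,[B,A]]=A^{q2^{m+2}}\rangle$, with $H'$ the derived subgroup. *)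

(* Defs.v *)
From Stdlib Require Import Reals Lra.
Open Scope R_scope.

Record Tc := mkT { tre : R; tim : R; tnorm : tre * tre + tim * tim = 1 }.

Lemma tmul_norm (a b c d : R) :
  a * a + b * b = 1 -> c * c + d * d = 1 ->
  (a * c - b * d) * (a * c - b * d) + (a * d + b * c) * (a * d + b * c) = 1.
Proof.
  intros H1 H2.
  replace ((a * c - b * d) * (a * c - b * d) + (a * d + b * c) * (a * d + b * c))
    with ((a * a + b * b) * (c * c + d * d)) by ring.
  rewrite H1, H2; ring.
Qed.

(* complex multiplication *)
Definition tmul (z w : Tc) : Tc :=
  mkT (tre z * tre w - tim z * tim w) (tre z * tim w + tim z * tre w)
      (tmul_norm _ _ _ _ (tnorm z) (tnorm w)).

Lemma t1_norm : 1 * 1 + 0 * 0 = 1. Proof. ring. Qed.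
Lemma ti_norm : 0 * 0 + 1 * 1 = 1. Proof. ring. Qed.
Lemma tmi_norm : 0 * 0 + (-1) * (-1) = 1. Proof. ring. Qed.

Definition t1 : Tc := mkT 1 0 t1_norm.
Definition ti : Tc := mkT 0 1 ti_norm.
Definition tmi : Tc := mkT 0 (-1) tmi_norm.

Fixpoint tpow (z : Tc) (n : nat) : Tc :=
  match n with O => t1 | S n => tmul z (tpow z n) end.

Lemma expi_norm (t : R) : cos t * cos t + sin t * sin t = 1.
Proof. pose proof (sin2_cos2 t) as H. unfold Rsqr in H. lra. Qed.

Definition expi (t : R) : Tc := mkT (cos t) (sin t) (expi_norm t).

Record group := Group {
  gcar :> Type;
  gmul : gcar -> gcar -> gcar;
  gone : gcar;
  ginv : gcar -> gcar;
  gmulA : forall x y z, gmul x (gmul y z) = gmul (gmul x y) z;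
  gmul1l : forall x, gmul gone x = x;
  gmul1r : forall x, gmul x gone = x;
  gmulVl : forall x, gmul (ginv x) x = gone;
  gmulVr : forall x, gmul x (ginv x) = gone }.

Arguments gmul {g} _ _.
Arguments gone {g}.
Arguments ginv {g} _.

Fixpoint gpow {G : group} (x : G) (n : nat) : G :=
  match n with O => gone | S n => gmul x (gpow x n) end.

Definition comm {G : group} (a b : G) : G :=
  gmul (gmul (ginv a) (ginv b)) (gmul a b).

Inductive gen {G : group} (S : G -> Prop) : G -> Prop :=
| gen_in : forall x, S x -> gen S x
| gen_one : gen S gone
| gen_mul : forall x y, gen S x -> gen S y -> gen S (gmul x y)
| gen_inv : forall x, gen S x -> gen S (ginv x).

Definition derived {G : group} (U : G -> Prop) : G -> Prop :=
  gen (fun g => exists a b, U a /\ U b /\ g = comm a b).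

(* ---------- H~ = < X, Y, T | X^4 = Y^8 = 1, [T,H~] = 1, [X,H~'] = 1,
                               [Y,[Y,X]] = i > ---------- *)
(* relations for (x, y, f : T -> G') inside the subgroup they generate *)
Definition Htilde_rels (G : group) (x y : G) (f : Tc -> G) : Prop :=
  let U := gen (fun g => g = x \/ g = y \/ exists z, g = f z) in
  (forall z w, f (tmul z w) = gmul (f z) (f w)) /\
  gpow x 4 = gone /\ gpow y 8 = gone /\
  (forall z g, U g -> gmul (f z) g = gmul g (f z)) /\
  (forall g, derived U g -> gmul x g = gmul g x) /\
  comm y (comm y x) = f ti.

Definition is_Htilde (G : group) (X Y : G) (iota : Tc -> G) : Prop :=
  Htilde_rels G X Y iota /\
  (forall g : G, gen (fun h => h = X \/ h = Y \/ exists z, h = iota z) g) /\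
  (forall (G' : group) (x y : G') (f : Tc -> G'), Htilde_rels G' x y f ->
     exists h : G -> G',
       (forall g1 g2, h (gmul g1 g2) = gmul (h g1) (h g2)) /\
       h X = x /\ h Y = y /\ (forall z, h (iota z) = f z)).

(* ---------- H(m,q) = < A, B | A^(2^(m+4)) = B^8 = 1, [A^4,H] = 1, [A,H'] = 1,
                               [B,[B,A]] = A^(q 2^(m+2)) > ---------- *)
Definition Hmq_rels (m q : nat) (G : group) (a b : G) : Prop :=
  let U := gen (fun g => g = a \/ g = b) in
  gpow a (2 ^ (m + 4)) = gone /\ gpow b 8 = gone /\
  (forall g, U g -> gmul (gpow a 4) g = gmul g (gpow a 4)) /\
  (forall g, derived U g -> gmul a g = gmul g a) /\
  comm b (comm b a) = gpow a (q * 2 ^ (m + 2)).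

Definition is_Hmq (m q : nat) (P : group) (A B : P) : Prop :=
  Hmq_rels m q P A B /\
  (forall p : P, gen (fun h => h = A \/ h = B) p) /\
  (forall (G' : group) (a b : G'), Hmq_rels m q G' a b ->
     exists h : P -> G',
       (forall p1 p2, h (gmul p1 p2) = gmul (h p1) (h p2)) /\ h A = a /\ h B = b).

Definition hom_to_T {G : group} (f : G -> Tc) : Prop :=
  forall g h, f (gmul g h) = tmul (f g) (f h).

(* Main.v *)
Require Import Defs.
From Stdlib Require Import Reals Lra Lia ZArith Znumtheory.
From Stdlib Require Import ClassicalEpsilon FunctionalExtensionality PropExtensionality ProofIrrelevance.
Open Scope R_scope.
Arguments gmulA {g} x y z.
Arguments gmul1l {g} x.
Arguments gmul1r {g} x.
Arguments gmulVl {g} x.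
Arguments gmulVr {g} x.

Section GroupLemmas.
Variable G : group.
Implicit Types x y z : G.

Lemma gcancel_l x y z : gmul x y = gmul x z -> y = z.
Proof. intro H. rewrite <- (gmul1l y), <- (gmul1l z), <- (gmulVl x), <- !gmulA, H. reflexivity. Qed.

Lemma gcancel_r x y z : gmul y x = gmul z x -> y = z.
Proof. intro H. rewrite <- (gmul1r y), <- (gmul1r z), <- (gmulVr x), !gmulA, H. reflexivity. Qed.

Lemma ginv_uniq x y : gmul x y = gone -> y = ginv x.
Proof. intro H. apply (gcancel_l x). rewrite H, gmulVr. reflexivity. Qed.

Lemma ginv_mul x y : ginv (gmul x y) = gmul (ginv y) (ginv x).
Proof. symmetry. apply ginv_uniq. rewrite <- gmulA, (gmulA y), gmulVr, gmul1l, gmulVr. reflexivity. Qed.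

Lemma ginv_one : ginv (gone : G) = gone.
Proof. symmetry. apply ginv_uniq. apply gmul1l. Qed.

Lemma ginv_ginv x : ginv (ginv x) = x.
Proof. symmetry. apply ginv_uniq. apply gmulVl. Qed.

Lemma gpow_add x n k : gpow x (n + k) = gmul (gpow x n) (gpow x k).
Proof. induction n; simpl. rewrite gmul1l; auto. rewrite IHn, gmulA. auto. Qed.

Lemma gpow_mul x n k : gpow x (n * k) = gpow (gpow x n) k.
Proof. induction k; simpl. rewrite Nat.mul_0_r. auto.
 rewrite Nat.mul_succ_r, Nat.add_comm, gpow_add, IHk. auto. Qed.

Lemma gpow_one n : gpow (gone : G) n = gone.
Proof. induction n; simpl; auto. rewrite IHn, gmul1l; auto. Qed.

Lemma gpow_comm x n : gmul x (gpow x n) = gmul (gpow x n) x.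
Proof. induction n; simpl. rewrite gmul1l, gmul1r; auto. rewrite <- gmulA, IHn; auto. Qed.

Lemma gen_mono (S S' : G -> Prop) : (forall x, S x -> gen S' x) -> forall x, gen S x -> gen S' x.
Proof. intros H x Hx. induction Hx. auto. apply gen_one. apply gen_mul; auto. apply gen_inv; auto. Qed.

End GroupLemmas.

Section Hom.
Variables G H : group.
Variable f : G -> H.
Hypothesis fM : forall a b, f (gmul a b) = gmul (f a) (f b).
Lemma hom1 : f gone = gone.
Proof. apply (gcancel_l _ (f gone)). rewrite <- fM, !gmul1r. auto. Qed.
Lemma homV a : f (ginv a) = ginv (f a).
Proof. apply ginv_uniq. rewrite <- fM, gmulVr, hom1. auto. Qed.
Lemma homX a n : f (gpow a n) = gpow (f a) n.
Proof. induction n; simpl. apply hom1. rewrite fM, IHn; auto. Qed.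
End Hom.

Lemma Tc_eq (z w : Tc) : tre z = tre w -> tim z = tim w -> z = w.
Proof. destruct z as [a b h], w as [c d h']; simpl; intros; subst. f_equal. apply proof_irrelevance. Qed.

Lemma tinv_norm (z : Tc) : tre z * tre z + (- tim z) * (- tim z) = 1.
Proof. pose proof (tnorm z). lra. Qed.
Definition tinv (z : Tc) : Tc := mkT (tre z) (- tim z) (tinv_norm z).

Lemma tmulA z w u : tmul z (tmul w u) = tmul (tmul z w) u.
Proof. apply Tc_eq; simpl; ring. Qed.
Lemma tmulC z w : tmul z w = tmul w z.
Proof. apply Tc_eq; simpl; ring. Qed.
Lemma tmul1l z : tmul t1 z = z.
Proof. apply Tc_eq; simpl; ring. Qed.
Lemma tmul1r z : tmul z t1 = z.
Proof. apply Tc_eq; simpl; ring. Qed.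
Lemma tmulVl z : tmul (tinv z) z = t1.
Proof. pose proof (tnorm z). apply Tc_eq; simpl; lra. Qed.
Lemma tmulVr z : tmul z (tinv z) = t1.
Proof. rewrite tmulC; apply tmulVl. Qed.

Definition TG : group := Group Tc tmul t1 tinv tmulA tmul1l tmul1r tmulVl tmulVr.

Lemma tpow_gpow z n : tpow z n = @gpow TG z n.
Proof. induction n; simpl; auto. rewrite IHn; auto. Qed.
Lemma tpow_add z n k : tpow z (n + k) = tmul (tpow z n) (tpow z k).
Proof. rewrite !tpow_gpow. exact (gpow_add TG z n k). Qed.
Lemma tpow_mul z n k : tpow z (n * k) = tpow (tpow z n) k.
Proof. rewrite !tpow_gpow. exact (gpow_mul TG z n k). Qed.
Lemma tpow_tmul z w n : tpow (tmul z w) n = tmul (tpow z n) (tpow w n).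
Proof. induction n; simpl. rewrite tmul1l; auto. rewrite IHn.
 rewrite !tmulA. f_equal. rewrite <- !tmulA. f_equal. apply tmulC. Qed.
Lemma tpow_t1 n : tpow t1 n = t1.
Proof. rewrite !tpow_gpow. exact (gpow_one TG n). Qed.

Lemma expi_add a b : tmul (expi a) (expi b) = expi (a + b).
Proof. apply Tc_eq; simpl; rewrite ?cos_plus, ?sin_plus; ring. Qed.
Lemma tpow_expi t n : tpow (expi t) n = expi (INR n * t).
Proof. induction n. apply Tc_eq; simpl; rewrite Rmult_0_l, ?cos_0, ?sin_0; auto.
 simpl tpow. rewrite IHn, expi_add. f_equal. rewrite S_INR. ring. Qed.
Lemma expi_eq a b : cos a = cos b -> sin a = sin b -> expi a = expi b.
Proof. intros; apply Tc_eq; simpl; auto. Qed.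
Lemma expi_per x (l : Z) : expi (x + 2 * IZR l * PI) = expi x.
Proof.
  destruct (Z_le_gt_dec 0 l).
  - rewrite <- (Z2Nat.id l) by lia. rewrite <- INR_IZR_INZ.
    apply expi_eq; [apply cos_period| apply sin_period].
  - replace x with ((x + 2 * IZR l * PI) + 2 * INR (Z.to_nat (- l)) * PI) at 2.
    apply expi_eq; symmetry; [apply cos_period| apply sin_period].
    rewrite INR_IZR_INZ, Z2Nat.id by lia. rewrite opp_IZR. ring.
Qed.

Lemma Tc_polar (z : Tc) : exists t, z = expi t.
Proof.
  pose proof (tnorm z) as N.
  assert (B : -1 <= tre z <= 1) by nra.
  assert (S : sqrt (1 - (tre z)²) = Rabs (tim z)).
  { rewrite <- sqrt_Rsqr_abs. f_equal. unfold Rsqr. lra. }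
  destruct (Rle_dec 0 (tim z)).
  - exists (acos (tre z)). apply Tc_eq; simpl. rewrite cos_acos; auto.
    rewrite sin_acos, S, Rabs_right; lra.
  - exists (- acos (tre z)). apply Tc_eq; simpl. rewrite cos_neg, cos_acos; auto.
    rewrite sin_neg, sin_acos, S, Rabs_left; lra.
Qed.

Lemma cos_eq_1_Z x : cos x = 1 -> exists j : Z, x = 2 * IZR j * PI.
Proof.
  intro H. assert (sin (x/2) = 0).
  { pose proof (cos_2a_sin (x/2)). replace (2 * (x/2)) with x in H0 by field.
    assert (sin (x/2) * sin (x/2) = 0) by lra. apply Rmult_integral in H1. tauto. }
  apply sin_eq_0_0 in H0. destruct H0 as [k Hk]. exists k. lra.
Qed.

Section Prod.
Variables P Q : group.
Definition pmul (a b : P * Q) : P * Q := (gmul (fst a) (fst b), gmul (snd a) (snd b)).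
Definition pinv (a : P * Q) : P * Q := (ginv (fst a), ginv (snd a)).
Lemma pmulA x y z : pmul x (pmul y z) = pmul (pmul x y) z.
Proof. unfold pmul; simpl; rewrite !gmulA; auto. Qed.
Lemma pmul1l x : pmul (gone, gone) x = x.
Proof. destruct x; unfold pmul; simpl; rewrite !gmul1l; auto. Qed.
Lemma pmul1r x : pmul x (gone, gone) = x.
Proof. destruct x; unfold pmul; simpl; rewrite !gmul1r; auto. Qed.
Lemma pmulVl x : pmul (pinv x) x = (gone, gone).
Proof. destruct x; unfold pmul; simpl; rewrite !gmulVl; auto. Qed.
Lemma pmulVr x : pmul x (pinv x) = (gone, gone).
Proof. destruct x; unfold pmul; simpl; rewrite !gmulVr; auto. Qed.
Definition PG : group := Group (P * Q) pmul (gone, gone) pinv pmulA pmul1l pmul1r pmulVl pmulVr.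
Lemma PG_pow (x : P) (y : Q) n : @gpow PG (x, y) n = (gpow x n, gpow y n).
Proof. induction n; simpl; auto. rewrite IHn. reflexivity. Qed.
End Prod.

Section Quot.
Variable M : group.
Variable u : M.
Variable N : nat.
Hypothesis Npos : (0 < N)%nat.
Hypothesis uN : gpow u N = gone.
Hypothesis ucent : forall x, gmul u x = gmul x u.

Definition qrel (x y : M) : Prop := exists k, y = gmul x (gpow u k).

Lemma upow_cent k x : gmul (gpow u k) x = gmul x (gpow u k).
Proof. induction k; simpl. rewrite gmul1l, gmul1r; auto.
 rewrite <- gmulA, IHk, !gmulA, ucent; auto. Qed.

Lemma upow_inv k : ginv (gpow u k) = gpow u (k * (N - 1)).
Proof. symmetry; apply ginv_uniq. rewrite <- gpow_add.
 replace (k + k * (N-1))%nat with (k * N)%nat by nia.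
 rewrite Nat.mul_comm, gpow_mul, uN, gpow_one; auto. Qed.

Lemma qrel_refl x : qrel x x.
Proof. exists 0%nat; simpl; rewrite gmul1r; auto. Qed.
Lemma qrel_sym x y : qrel x y -> qrel y x.
Proof. intros [k ->]. exists (k * (N-1))%nat. rewrite <- upow_inv, <- gmulA, gmulVr, gmul1r; auto. Qed.
Lemma qrel_trans x y z : qrel x y -> qrel y z -> qrel x z.
Proof. intros [k ->] [l ->]. exists (k + l)%nat. rewrite gpow_add, gmulA; auto. Qed.
Lemma qrel_mul x x' y y' : qrel x x' -> qrel y y' -> qrel (gmul x y) (gmul x' y').
Proof. intros [k ->] [l ->]. exists (k + l)%nat. rewrite gpow_add.
 rewrite <- !gmulA. f_equal. rewrite !gmulA, upow_cent; auto. Qed.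
Lemma qrel_inv x x' : qrel x x' -> qrel (ginv x) (ginv x').
Proof. intros [k ->]. exists (k * (N-1))%nat. rewrite ginv_mul, upow_inv, upow_cent; auto. Qed.

Definition qnorm (x : M) : M := epsilon (inhabits (gone : M)) (fun y => qrel x y).
Lemma qnorm_rel x : qrel x (qnorm x).
Proof. unfold qnorm. apply epsilon_spec. exists x. apply qrel_refl. Qed.
Lemma qnorm_eq x y : qrel x y -> qnorm x = qnorm y.
Proof. intro H. unfold qnorm. f_equal. apply functional_extensionality; intro z.
 apply propositional_extensionality; split; intro H'.
 - apply qrel_trans with x; auto. apply qrel_sym; auto.
 - apply qrel_trans with y; auto. Qed.

Definition QT := {x : M | qnorm x = x}.
Lemma QT_eq (a b : QT) : proj1_sig a = proj1_sig b -> a = b.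
Proof. destruct a as [a ha], b as [b hb]; simpl; intros; subst. f_equal. apply proof_irrelevance. Qed.
Definition cls (x : M) : QT := exist _ (qnorm x) (qnorm_eq _ _ (qrel_sym _ _ (qnorm_rel x))).
Lemma cls_eq x y : cls x = cls y <-> qrel x y.
Proof. split; intro H.
 - apply (f_equal (@proj1_sig _ _)) in H. simpl in H.
   apply qrel_trans with (qnorm x). apply qnorm_rel. rewrite H. apply qrel_sym, qnorm_rel.
 - apply QT_eq; simpl. apply qnorm_eq; auto. Qed.
Lemma cls_proj (q : QT) : cls (proj1_sig q) = q.
Proof. apply QT_eq; simpl. destruct q; simpl; auto. Qed.
Lemma QT_ind (Pr : QT -> Prop) : (forall x, Pr (cls x)) -> forall q, Pr q.
Proof. intros H q. rewrite <- cls_proj. apply H. Qed.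

Definition qmul (a b : QT) : QT := cls (gmul (proj1_sig a) (proj1_sig b)).
Definition qinv (a : QT) : QT := cls (ginv (proj1_sig a)).
Lemma proj_cls x : qrel x (proj1_sig (cls x)).
Proof. apply qnorm_rel. Qed.
Lemma qmul_cls x y : qmul (cls x) (cls y) = cls (gmul x y).
Proof. apply cls_eq. apply qrel_mul; apply qrel_sym, proj_cls. Qed.
Lemma qinv_cls x : qinv (cls x) = cls (ginv x).
Proof. apply cls_eq. apply qrel_inv; apply qrel_sym, proj_cls. Qed.
Lemma qmulA x y z : qmul x (qmul y z) = qmul (qmul x y) z.
Proof. revert x y z. refine (QT_ind _ _); intro x. refine (QT_ind _ _); intro y. refine (QT_ind _ _); intro z.
 rewrite !qmul_cls, gmulA; auto. Qed.
Lemma qmul1l x : qmul (cls gone) x = x.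
Proof. revert x; refine (QT_ind _ _); intro x. rewrite qmul_cls, gmul1l; auto. Qed.
Lemma qmul1r x : qmul x (cls gone) = x.
Proof. revert x; refine (QT_ind _ _); intro x. rewrite qmul_cls, gmul1r; auto. Qed.
Lemma qmulVl x : qmul (qinv x) x = cls gone.
Proof. revert x; refine (QT_ind _ _); intro x. rewrite qinv_cls, qmul_cls, gmulVl; auto. Qed.
Lemma qmulVr x : qmul x (qinv x) = cls gone.
Proof. revert x; refine (QT_ind _ _); intro x. rewrite qinv_cls, qmul_cls, gmulVr; auto. Qed.
Definition QG : group := Group QT qmul (cls gone) qinv qmulA qmul1l qmul1r qmulVl qmulVr.
Lemma QG_pow x n : @gpow QG (cls x) n = cls (gpow x n).
Proof. induction n; simpl; auto. rewrite IHn. apply qmul_cls. Qed.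
End Quot.

Lemma INR_pow2 n : INR (2 ^ n) = 2 ^ n.
Proof. rewrite pow_INR. f_equal. Qed.

Lemma pow2_pos n : 0 < 2 ^ n.
Proof. apply pow_lt; lra. Qed.

Definition zeta (m q : nat) := expi (PI * INR q / 2 ^ (m + 3)).

Lemma pow_m (m k : nat) : 2 ^ (m + k) = 2 ^ m * 2 ^ k.
Proof. apply pow_add. Qed.

Lemma tpow_zeta m q n : tpow (zeta m q) n = expi (INR n * (PI * INR q / 2 ^ (m + 3))).
Proof. apply tpow_expi. Qed.

Lemma zeta_full m q : tpow (zeta m q) (2 ^ (m + 4)) = t1.
Proof.
  rewrite tpow_zeta, INR_pow2, !pow_m.
  replace (2 ^ m * 2 ^ 4 * (PI * INR q / (2 ^ m * 2 ^ 3))) with (0 + 2 * IZR (Z.of_nat q) * PI).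
  rewrite expi_per. apply Tc_eq; simpl; [apply cos_0 | apply sin_0].
  rewrite <- INR_IZR_INZ. pose proof (pow2_pos m). field. lra.
Qed.

Lemma expi_congr a b : a = b -> expi a = expi b.
Proof. intros ->; auto. Qed.
Lemma expi_PI2 : expi (PI / 2) = ti.
Proof. apply Tc_eq; simpl; [apply cos_PI2 | apply sin_PI2]. Qed.
Lemma expi_mPI2 : expi (- (PI / 2)) = tmi.
Proof. apply Tc_eq; simpl; [rewrite cos_neg; apply cos_PI2 | rewrite sin_neg, sin_PI2; auto]. Qed.

Lemma zeta_rel m q : (q = 1 \/ q = 3)%nat -> tpow (zeta m q) (q * 2 ^ (m + 2)) = ti.
Proof.
  intro hq. rewrite tpow_zeta, mult_INR, INR_pow2, !pow_m.
  pose proof (pow2_pos m).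
  destruct hq; subst; simpl INR.
  - rewrite (expi_congr _ (PI/2)) by (field; lra). apply expi_PI2.
  - rewrite (expi_congr _ (PI/2 + 2 * IZR 2 * PI)) by (simpl; field; lra). rewrite expi_per. apply expi_PI2.
Qed.

Lemma chi_X' m q : (q = 1 \/ q = 3)%nat ->
  tmul (tpow (tpow (zeta m q) 4) (2 ^ m)) (tpow tmi q) = t1.
Proof.
  intro hq. rewrite <- tpow_mul, tpow_zeta, mult_INR, INR_pow2, !pow_m.
  pose proof (pow2_pos m).
  destruct hq; subst; simpl INR.
  - rewrite (expi_congr _ (PI/2)) by (field; lra). rewrite expi_PI2. apply Tc_eq; simpl; ring.
  - rewrite (expi_congr _ (3 * (PI/2))) by (field; lra).
    apply Tc_eq; simpl; rewrite ?cos_3PI2, ?sin_3PI2; ring.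
Qed.

Definition cz (m q : nat) := tinv (tpow (zeta m q) 4).

Lemma tinv_expi t : tinv (expi t) = expi (- t).
Proof. apply Tc_eq; simpl; rewrite ?cos_neg, ?sin_neg; auto. Qed.

Lemma tpow_cz m q n : tpow (cz m q) n = expi (- (INR n * (2 * PI * INR q / 2 ^ (m + 2)))).
Proof. unfold cz. rewrite tpow_zeta, tinv_expi, tpow_expi. f_equal.
  rewrite !pow_m. pose proof (pow2_pos m). simpl INR. field. lra. Qed.

Lemma cz_full m q : tpow (cz m q) (2 ^ (m + 2)) = t1.
Proof.
  rewrite tpow_cz, INR_pow2.
  replace (- (2 ^ (m + 2) * (2 * PI * INR q / 2 ^ (m + 2)))) with (0 + 2 * IZR (- Z.of_nat q) * PI).
  rewrite expi_per. apply Tc_eq; simpl; [apply cos_0 | apply sin_0].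
  rewrite opp_IZR, <- INR_IZR_INZ. pose proof (pow2_pos (m+2)). field. lra.
Qed.

Lemma cz_rel m q : (q = 1 \/ q = 3)%nat -> tmul ti (tpow (cz m q) (q * 2 ^ m)) = t1.
Proof.
  intro hq. rewrite tpow_cz, mult_INR, INR_pow2, !pow_m.
  pose proof (pow2_pos m).
  destruct hq; subst; simpl INR.
  - rewrite (expi_congr _ (- (PI/2))) by (field; lra).
    rewrite expi_mPI2. apply Tc_eq; simpl; ring.
  - rewrite (expi_congr _ (- (PI / 2) + 2 * IZR (-2) * PI)) by (simpl; field; lra).
    rewrite expi_per, expi_mPI2. apply Tc_eq; simpl; ring.
Qed.

Lemma pow2_mod3 (e : nat) : exists a : Z, (Z.of_nat (2 ^ e) = 3 * a + 1 \/ Z.of_nat (2 ^ e) = 3 * a + 2)%Z.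
Proof.
  induction e. exists 0%Z. simpl. lia.
  destruct IHe as [a [H|H]]; rewrite Nat.pow_succ_r', Nat2Z.inj_mul, H.
  - exists (2 * a)%Z. lia.
  - exists (2 * a + 1)%Z. lia.
Qed.

Lemma inv_mod (m q : nat) : (q = 1 \/ q = 3)%nat ->
  exists r s : Z, (Z.of_nat q * r = 1 + Z.of_nat (2 ^ (m + 2)) * s)%Z.
Proof.
  intros [->| ->].
  - exists 1%Z, 0%Z. lia.
  - destruct (pow2_mod3 (m + 2)) as [a [H|H]]; rewrite H.
    + exists (2 * a + 1)%Z, 2%Z. lia.
    + exists (a + 1)%Z, 1%Z. lia.
Qed.

Lemma Nz_pos m : (0 < Z.of_nat (2 ^ (m + 2)))%Z.
Proof. pose proof (Nat.pow_nonzero 2 (m+2)). lia. Qed.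

Lemma root_lemma m q : (q = 1 \/ q = 3)%nat -> forall z,
  tpow z (2 ^ (m + 2)) = t1 -> exists k, z = tpow (tpow (zeta m q) 4) k.
Proof.
  intros hq z Hz. destruct (Tc_polar z) as [t ->].
  rewrite tpow_expi in Hz. apply (f_equal tre) in Hz. simpl in Hz.
  apply cos_eq_1_Z in Hz. destruct Hz as [j Hj].
  destruct (inv_mod m q hq) as [r [s Hrs]].
  set (Nz := Z.of_nat (2 ^ (m + 2))) in *.
  assert (HN := Nz_pos m). fold Nz in HN.
  assert (Hk : (0 <= (r * j) mod Nz)%Z) by (apply Z.mod_pos_bound; lia).
  exists (Z.to_nat ((r * j) mod Nz)).
  set (l := (s * j - Z.of_nat q * ((r * j) / Nz))%Z).
  assert (HZ : (Z.of_nat q * Z.of_nat (Z.to_nat ((r * j) mod Nz)) = j + Nz * l)%Z).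
  { rewrite Z2Nat.id by lia. rewrite Z.mod_eq by lia. unfold l. nia. }
  assert (HR : INR q * INR (Z.to_nat ((r * j) mod Nz)) = IZR j + 2 ^ (m + 2) * IZR l).
  { rewrite !INR_IZR_INZ, <- mult_IZR, HZ, plus_IZR, mult_IZR. unfold Nz.
    rewrite <- INR_IZR_INZ, INR_pow2. ring. }
  rewrite <- tpow_mul, tpow_zeta, <- (expi_per t l). apply expi_congr.
  rewrite INR_pow2 in Hj. rewrite mult_INR. simpl INR.
  rewrite !pow_m in *. pose proof (pow2_pos m).
  apply (Rmult_eq_reg_l (2 ^ m * 2 ^ 2)); [| simpl; nra].
  replace ((1 + 1 + 1 + 1) * INR (Z.to_nat ((r * j) mod Nz)) * (PI * INR q / (2 ^ m * 2 ^ 3)))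
    with (2 * PI * (INR q * INR (Z.to_nat ((r * j) mod Nz))) / (2 ^ m * 2 ^ 2)) by (simpl; field; lra).
  rewrite HR. rewrite Rmult_plus_distr_l, Hj. simpl. field. lra.
Qed.

Lemma inj_lemma m q : (q = 1 \/ q = 3)%nat -> forall k,
  tpow (cz m q) k = t1 -> exists l, k = (l * 2 ^ (m + 2))%nat.
Proof.
  intros hq k Hk. rewrite tpow_cz in Hk. apply (f_equal tre) in Hk. simpl in Hk.
  apply cos_eq_1_Z in Hk. destruct Hk as [j Hj].
  destruct (inv_mod m q hq) as [r [s Hrs]].
  set (Nz := Z.of_nat (2 ^ (m + 2))) in *.
  assert (HN := Nz_pos m). fold Nz in HN.
  assert (HZ : (Z.of_nat q * Z.of_nat k = - j * Nz)%Z).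
  { apply eq_IZR. rewrite !mult_IZR, opp_IZR, <- !INR_IZR_INZ. unfold Nz. rewrite <- INR_IZR_INZ, INR_pow2.
    pose proof (pow2_pos (m + 2)). pose proof PI_RGT_0.
    apply (Rmult_eq_reg_l (2 * PI)); [| lra].
    transitivity ((INR k * (2 * PI * INR q / 2 ^ (m + 2))) * 2 ^ (m + 2)); [field; lra|].
    replace (INR k * (2 * PI * INR q / 2 ^ (m + 2))) with (- (2 * IZR j * PI)) by lra. ring. }
  assert (Hd : (Z.of_nat k = Nz * (r * - j - s * Z.of_nat k))%Z) by nia.
  exists (Z.to_nat (r * - j - s * Z.of_nat k)).
  assert (0 <= r * - j - s * Z.of_nat k)%Z by nia.
  apply Nat2Z.inj. rewrite Nat2Z.inj_mul, Z2Nat.id by lia. fold Nz. lia.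
Qed.

Lemma comm_cent (G : group) (a b c : G) : (forall g, gmul c g = gmul g c) -> comm a (gmul c b) = comm a b.
Proof.
  intro Hc.
  unfold comm. rewrite ginv_mul, <- !gmulA. f_equal. f_equal.
  rewrite (gmulA a c b), <- (Hc a), <- (gmulA c a b), (gmulA (ginv c) c), gmulVl, gmul1l. auto.
Qed.

Lemma tmul_swap a b c d : tmul (tmul a b) (tmul c d) = tmul (tmul a c) (tmul b d).
Proof. apply Tc_eq; simpl; ring. Qed.
Lemma tcomm a b : tmul (tmul (tinv a) (tinv b)) (tmul a b) = t1.
Proof. rewrite tmul_swap, !tmulVl. apply tmul1l. Qed.
Lemma tinv_t1 : tinv t1 = t1.
Proof. apply Tc_eq; simpl; ring. Qed.
Lemma tinv_tmul a b : tinv (tmul a b) = tmul (tinv a) (tinv b).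
Proof. apply Tc_eq; simpl; ring. Qed.
Lemma tpow_tinv z n : tpow (tinv z) n = tinv (tpow z n).
Proof. induction n; simpl. symmetry; apply tinv_t1. rewrite IHn, tinv_tmul. auto. Qed.

Lemma gen_pow (G : group) (S : G -> Prop) x n : gen S x -> gen S (gpow x n).
Proof. intro H. induction n; simpl. apply gen_one. apply gen_mul; auto. Qed.

Section Part1.
Variables (m q : nat) (hq : q = 1%nat \/ q = 3%nat)
  (G : group) (X Y : G) (iota : Tc -> G) (hG : is_Htilde G X Y iota)
  (theta psi : G -> Tc)
  (htheta : hom_to_T theta) (hthX : theta X = t1) (hthY : theta Y = t1)
  (hthT : forall z, theta (iota z) = tpow z 4)
  (hpsi : hom_to_T psi) (hpsX : psi X = tmi) (hpsY : psi Y = t1)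
  (hpsT : forall z, psi (iota z) = t1).

Definition Ugen := gen (fun g => g = X \/ g = Y \/ exists z, g = iota z).
Lemma hU : forall g, Ugen g.
Proof. apply hG. Qed.
Lemma iotaM : forall z w, iota (tmul z w) = gmul (iota z) (iota w).
Proof. apply hG. Qed.
Lemma X4 : gpow X 4 = gone.
Proof. apply hG. Qed.
Lemma Y8 : gpow Y 8 = gone.
Proof. apply hG. Qed.
Lemma iota_cent : forall z g, gmul (iota z) g = gmul g (iota z).
Proof. intros. apply hG. apply hU. Qed.
Lemma Xder : forall g, derived Ugen g -> gmul X g = gmul g X.
Proof. apply hG. Qed.
Lemma HYX : comm Y (comm Y X) = iota ti.
Proof. apply hG. Qed.

Lemma iota1 : iota t1 = gone.
Proof. exact (hom1 TG G iota iotaM). Qed.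
Lemma iotaV z : ginv (iota z) = iota (tinv z).
Proof. symmetry. exact (homV TG G iota iotaM z). Qed.
Lemma iotaX z n : iota (tpow z n) = gpow (iota z) n.
Proof. rewrite tpow_gpow. exact (homX TG G iota iotaM z n). Qed.

Definition zt := zeta m q.
Definition X' := gmul (iota zt) X.
Definition W := gen (fun h => h = X' \/ h = Y).

Lemma gpow_X' n : gpow X' n = gmul (iota (tpow zt n)) (gpow X n).
Proof. induction n; simpl. rewrite iota1, gmul1l; auto.
  rewrite IHn, iotaM. unfold X'. rewrite <- !gmulA. f_equal. rewrite !gmulA. f_equal. symmetry; apply iota_cent. Qed.

Lemma decomp g : exists z w, W w /\ g = gmul (iota z) w.
Proof.
  generalize (hU g). intro H. induction H as [g [->|[->|[z ->]]]| |g1 g2 _ [z1 [w1 [Hw1 ->]]] _ [z2 [w2 [Hw2 ->]]]|g _ [z [w [Hw ->]]]].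
  - exists (tinv zt), X'. split. apply gen_in; auto. unfold X'. rewrite gmulA, <- iotaM, tmulVl, iota1, gmul1l. auto.
  - exists t1, Y. split. apply gen_in; auto. rewrite iota1, gmul1l. auto.
  - exists z, gone. split. apply gen_one. rewrite gmul1r; auto.
  - exists t1, gone. split. apply gen_one. rewrite iota1, gmul1l; auto.
  - exists (tmul z1 z2), (gmul w1 w2). split. apply gen_mul; auto.
    rewrite iotaM, <- !gmulA. f_equal. rewrite !gmulA. f_equal. symmetry. apply iota_cent.
  - exists (tinv z), (ginv w). split. apply gen_inv; auto.
    rewrite ginv_mul, iotaV. symmetry. apply iota_cent.
Qed.

Definition chi g := tmul (tpow (theta g) (2 ^ m)) (tpow (psi g) q).

Lemma chiM g h : chi (gmul g h) = tmul (chi g) (chi h).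
Proof. unfold chi. rewrite htheta, hpsi, !tpow_tmul. apply tmul_swap. Qed.
Lemma chi1 : chi gone = t1.
Proof. exact (hom1 G TG chi chiM). Qed.
Lemma chiV g : chi (ginv g) = tinv (chi g).
Proof. exact (homV G TG chi chiM g). Qed.

Lemma W_K g : W g -> chi g = t1.
Proof.
  intro H. induction H as [g [->| ->]| |g1 g2 _ H1 _ H2|g _ H].
  - unfold chi, X'. rewrite htheta, hpsi, hthT, hpsT, hthX, hpsX, tmul1r, tmul1l.
    apply chi_X'. auto.
  - unfold chi. rewrite hthY, hpsY, !tpow_t1. apply tmul1l.
  - apply chi1.
  - rewrite chiM, H1, H2. apply tmul1l.
  - rewrite chiV, H. apply tinv_t1.
Qed.

Lemma K_W g : chi g = t1 -> W g.
Proof.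
  intro H. destruct (decomp g) as [z [w [Hw ->]]].
  rewrite chiM, (W_K w Hw), tmul1r in H.
  unfold chi in H. rewrite hthT, hpsT, tpow_t1, tmul1r, <- tpow_mul in H.
  replace (4 * 2 ^ m)%nat with (2 ^ (m + 2))%nat in H by (rewrite Nat.pow_add_r; simpl; lia).
  destruct (root_lemma m q hq z H) as [k ->].
  apply gen_mul; auto.
  rewrite iotaX, iotaX. fold zt.
  replace (gpow (gpow (iota zt) 4) k) with (gpow (gpow X' 4) k).
  apply gen_pow, gen_pow, gen_in; auto.
  rewrite gpow_X', X4, gmul1r, iotaX. auto.
Qed.

End Part1.

Section Part2.
Variables (m q : nat) (hq : q = 1%nat \/ q = 3%nat)
  (G : group) (X Y : G) (iota : Tc -> G) (hG : is_Htilde G X Y iota)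
  (P : group) (A B : P) (hP : is_Hmq m q P A B).

Definition Pgen := gen (fun h => h = A \/ h = B).
Lemma hPall : forall p, Pgen p.
Proof. apply hP. Qed.
Lemma Afull : gpow A (2 ^ (m + 4)) = gone.
Proof. apply hP. Qed.
Lemma B8 : gpow B 8 = gone.
Proof. apply hP. Qed.
Lemma A4cent : forall p, gmul (gpow A 4) p = gmul p (gpow A 4).
Proof. intro. apply hP. apply hPall. Qed.
Lemma Ader : forall p, derived Pgen p -> gmul A p = gmul p A.
Proof. apply hP. Qed.
Lemma HBA : comm B (comm B A) = gpow A (q * 2 ^ (m + 2)).
Proof. apply hP. Qed.

Definition M := PG P TG.
Lemma M_pow (x : P) (z : Tc) n : @gpow M (x, z) n = (gpow x n, tpow z n).
Proof. unfold M. rewrite PG_pow, tpow_gpow. auto. Qed.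
Lemma M_mul (a c : P) (b d : Tc) : @gmul M (a, b) (c, d) = (gmul a c, tmul b d).
Proof. reflexivity. Qed.
Lemma M_comm (a c : P) (b d : Tc) : @comm M (a, b) (c, d) = (comm a c, t1).
Proof. unfold comm. change (@gmul M ?x ?y) with (pmul P TG x y). change (@ginv M ?x) with (pinv P TG x).
  unfold pmul, pinv; simpl. rewrite tcomm. auto. Qed.
Definition uu : M := (gpow A 4, cz m q).
Definition NN := (2 ^ (m + 2))%nat.
Lemma NNpos : (0 < NN)%nat.
Proof. unfold NN. pose proof (Nat.pow_nonzero 2 (m+2)). lia. Qed.
Lemma uN : gpow uu NN = gone.
Proof. unfold uu, M, NN. rewrite PG_pow, <- tpow_gpow, cz_full, <- gpow_mul.
  replace (4 * 2 ^ (m + 2))%nat with (2 ^ (m + 4))%nat by (rewrite !Nat.pow_add_r; simpl; lia).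
  rewrite Afull. reflexivity. Qed.
Lemma ucent : forall x, gmul uu x = gmul x uu.
Proof. intros [p z]. unfold uu. simpl. unfold pmul. simpl. rewrite A4cent, tmulC. auto. Qed.

Definition Qg := QG M uu NN NNpos uN ucent.
Definition ccl (x : M) : Qg := cls M uu NN NNpos uN x.

Lemma ccl_mul x y : gmul (ccl x) (ccl y) = ccl (gmul x y).
Proof. exact (qmul_cls M uu NN NNpos uN ucent x y). Qed.
Lemma ccl_inv x : ginv (ccl x) = ccl (ginv x).
Proof. exact (qinv_cls M uu NN NNpos uN ucent x). Qed.
Lemma ccl_one : (gone : Qg) = ccl gone.
Proof. reflexivity. Qed.
Lemma ccl_pow x n : gpow (ccl x) n = ccl (gpow x n).
Proof. exact (QG_pow M uu NN NNpos uN ucent x n). Qed.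
Lemma ccl_comm x y : comm (ccl x) (ccl y) = ccl (comm x y).
Proof. unfold comm. rewrite !ccl_inv, !ccl_mul. auto. Qed.
Lemma ccl_eq x y : ccl x = ccl y <-> qrel M uu x y.
Proof. exact (cls_eq M uu NN NNpos uN x y). Qed.
Lemma ccl_all (g : Qg) : exists x, g = ccl x.
Proof. exists (proj1_sig g). symmetry. exact (cls_proj M uu NN NNpos uN g). Qed.

Definition x' : Qg := ccl (A, tinv (zt m q)).
Definition y' : Qg := ccl (B, t1).
Definition f' (z : Tc) : Qg := ccl (gone, z).

Lemma rels' : Htilde_rels Qg x' y' f'.
Proof.
  unfold Htilde_rels. split; [|split; [|split; [|split; [|split]]]].
  - intros z w. unfold f'. rewrite ccl_mul. simpl. unfold pmul; simpl. rewrite gmul1l. auto.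
  - unfold x'. rewrite ccl_pow, M_pow. symmetry. apply ccl_eq. exists 1%nat.
    simpl. unfold pmul; simpl. rewrite !gmul1l, gmul1r, tmul1l, tmul1r. unfold cz.
    rewrite <- tpow_tinv. simpl. rewrite !tmul1r, gmul1r. auto.
  - unfold y'. rewrite ccl_pow, M_pow, B8, tpow_t1. reflexivity.
  - intros z g _. destruct (ccl_all g) as [[p w] ->]. unfold f'. rewrite !ccl_mul. simpl. unfold pmul; simpl.
    rewrite gmul1l, gmul1r, tmulC. auto.
  - intros g Hg.
    assert (Hd : exists p, derived Pgen p /\ g = ccl (p, t1)).
    { induction Hg as [g [a [b [_ [_ ->]]]]| |g1 g2 _ [p1 [Hp1 ->]] _ [p2 [Hp2 ->]]|g _ [p [Hp ->]]].
      - destruct (ccl_all a) as [[pa za] ->]. destruct (ccl_all b) as [[pb zb] ->].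
        exists (comm pa pb). split. apply gen_in. exists pa, pb. split; [apply hPall|split; [apply hPall|auto]].
        rewrite ccl_comm. unfold comm at 1. simpl. unfold pmul; simpl. rewrite tcomm. auto.
      - exists gone. split. apply gen_one. reflexivity.
      - exists (gmul p1 p2). split. apply gen_mul; auto. rewrite ccl_mul. simpl. unfold pmul; simpl. rewrite tmul1l. auto.
      - exists (ginv p). split. apply gen_inv; auto. rewrite ccl_inv. simpl. unfold pinv; simpl. rewrite tinv_t1. auto. }
    destruct Hd as [p [Hp ->]]. unfold x'. rewrite !ccl_mul. simpl. unfold pmul; simpl.
    rewrite Ader by auto. rewrite tmul1l, tmul1r. auto.
  - unfold x', y', f'. rewrite !ccl_comm.
    rewrite !M_comm, HBA. symmetry. apply ccl_eq. exists (q * 2 ^ m)%nat.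
    unfold uu. rewrite M_pow, M_mul, gmul1l, cz_rel by auto. rewrite <- gpow_mul.
    replace (4 * (q * 2 ^ m))%nat with (q * 2 ^ (m + 2))%nat by (rewrite Nat.pow_add_r; simpl; lia). auto.
Qed.

Notation XX := (X' m q G X iota).
Notation WW := (W m q G X Y iota).

Lemma relsG : Hmq_rels m q G XX Y.
Proof.
  unfold Hmq_rels. split; [|split; [|split; [|split]]].
  - rewrite (gpow_X' m q G X Y iota hG). unfold zt. rewrite zeta_full, (iota1 G X Y iota hG), gmul1l.
    replace (2 ^ (m + 4))%nat with (4 * (2 ^ m * 4))%nat by (rewrite Nat.pow_add_r; simpl; lia).
    rewrite gpow_mul, (X4 G X Y iota hG), gpow_one. auto.
  - exact (Y8 G X Y iota hG).
  - intros g _. rewrite (gpow_X' m q G X Y iota hG), (X4 G X Y iota hG), gmul1r.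
    apply (iota_cent G X Y iota hG).
  - intros g Hg.
    assert (Hd : derived (Ugen G X Y iota) g).
    { unfold derived in *. revert Hg. apply gen_mono. intros x [a [b [_ [_ ->]]]].
      apply gen_in. exists a, b. split; [apply (hU G X Y iota hG)|split; [apply (hU G X Y iota hG)|auto]]. }
    unfold X'. rewrite <- gmulA, (Xder G X Y iota hG g Hd), gmulA, (iota_cent G X Y iota hG (zt m q) g), <- gmulA. auto.
  - unfold X'. rewrite (comm_cent G Y X (iota (zt m q))) by (apply (iota_cent G X Y iota hG)).
    rewrite (HYX G X Y iota hG).
    rewrite (gpow_X' m q G X Y iota hG). unfold zt. rewrite zeta_rel by auto.
    replace (q * 2 ^ (m + 2))%nat with (4 * (q * 2 ^ m))%nat by (rewrite Nat.pow_add_r; simpl; lia).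
    rewrite gpow_mul, (X4 G X Y iota hG), gpow_one, gmul1r. auto.
Qed.

Lemma jinj p p' : ccl (p, t1) = ccl (p', t1) -> p = p'.
Proof.
  intro H. apply ccl_eq in H. destruct H as [k Hk]. unfold uu in Hk. rewrite M_pow, M_mul in Hk.
  pose proof (f_equal fst Hk) as Hp. pose proof (f_equal snd Hk) as Ht. cbn [fst snd] in Hp, Ht. clear Hk. rewrite tmul1l in Ht. symmetry in Ht.
  destruct (inj_lemma m q hq k Ht) as [l ->].
  rewrite <- gpow_mul in Hp.
  replace (4 * (l * 2 ^ (m + 2)))%nat with (2 ^ (m + 4) * l)%nat in Hp by (rewrite !Nat.pow_add_r; simpl; lia).
  rewrite gpow_mul, Afull, gpow_one, gmul1r in Hp. auto.
Qed.

Section WithPhi.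
Variable Phi : G -> Qg.
Hypothesis PhiM : forall g1 g2, Phi (gmul g1 g2) = gmul (Phi g1) (Phi g2).
Hypothesis PhiX : Phi X = x'.
Hypothesis PhiY : Phi Y = y'.
Hypothesis PhiT : forall z, Phi (iota z) = f' z.

Lemma PhiX' : Phi XX = ccl (A, t1).
Proof. unfold X'. rewrite PhiM, PhiX, PhiT. unfold f', x'. rewrite ccl_mul, M_mul, gmul1l, tmulVr. auto. Qed.

Lemma Phi_W g : WW g -> exists p, Phi g = ccl (p, t1).
Proof.
  intro H. induction H as [g [->| ->]| |g1 g2 _ [p1 H1] _ [p2 H2]|g _ [p Hp]].
  - exists A. apply PhiX'.
  - exists B. rewrite PhiY. auto.
  - exists gone. exact (hom1 G Qg Phi PhiM).
  - exists (gmul p1 p2). rewrite PhiM, H1, H2, ccl_mul, M_mul, tmul1l. auto.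
  - exists (ginv p). rewrite (homV G Qg Phi PhiM), Hp, ccl_inv. unfold M. simpl ginv. unfold pinv. simpl. rewrite tinv_t1. auto.
Qed.

Definition phi (g : G) : P := epsilon (inhabits (gone : P)) (fun p => Phi g = ccl (p, t1)).
Lemma phi_spec g : WW g -> Phi g = ccl (phi g, t1).
Proof. intro H. unfold phi. apply epsilon_spec. apply Phi_W; auto. Qed.
Lemma phiM g1 g2 : WW g1 -> WW g2 -> phi (gmul g1 g2) = gmul (phi g1) (phi g2).
Proof. intros H1 H2. apply jinj. rewrite <- phi_spec by (apply gen_mul; auto).
  rewrite PhiM, !phi_spec by auto. rewrite ccl_mul, M_mul, tmul1l. auto. Qed.
Lemma phiX' : phi XX = A.
Proof. apply jinj. rewrite <- phi_spec by (apply gen_in; auto). apply PhiX'. Qed.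
Lemma phiY : phi Y = B.
Proof. apply jinj. rewrite <- phi_spec by (apply gen_in; auto). rewrite PhiY. auto. Qed.
Lemma phi1 : phi gone = gone.
Proof. apply jinj. rewrite <- phi_spec by (apply gen_one). exact (hom1 G Qg Phi PhiM). Qed.
Lemma phiV g : WW g -> phi (ginv g) = ginv (phi g).
Proof. intro H. apply ginv_uniq. rewrite <- phiM by (auto; apply gen_inv; auto). rewrite gmulVr. apply phi1. Qed.

Variable h : P -> G.
Hypothesis hM : forall p1 p2, h (gmul p1 p2) = gmul (h p1) (h p2).
Hypothesis hA : h A = XX.
Hypothesis hB : h B = Y.

Lemma h_phi g : WW g -> h (phi g) = g.
Proof.
  intro H. induction H as [g [->| ->]| |g1 g2 H1 IH1 H2 IH2|g H IH].
  - rewrite phiX'. auto.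
  - rewrite phiY. auto.
  - rewrite phi1. exact (hom1 P G h hM).
  - rewrite phiM by auto. rewrite hM, IH1, IH2. auto.
  - rewrite phiV by auto. rewrite (homV P G h hM), IH. auto.
Qed.

Lemma phi_surj p : exists g, WW g /\ phi g = p.
Proof.
  generalize (hPall p). intro H. induction H as [p [->| ->]| |p1 p2 _ [g1 [H1 <-]] _ [g2 [H2 <-]]|p _ [g [Hg <-]]].
  - exists XX. split. apply gen_in; auto. apply phiX'.
  - exists Y. split. apply gen_in; auto. apply phiY.
  - exists gone. split. apply gen_one. apply phi1.
  - exists (gmul g1 g2). split. apply gen_mul; auto. apply phiM; auto.
  - exists (ginv g). split. apply gen_inv; auto. apply phiV; auto.
Qed.
End WithPhi.
End Part2.

Theorem mainTheorem9 (m q : nat) (hq : q = 1%nat \/ q = 3%nat)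
  (G : group) (X Y : G) (iota : Tc -> G) (hG : is_Htilde G X Y iota)
  (theta psi : G -> Tc)
  (htheta : hom_to_T theta) (hthX : theta X = t1) (hthY : theta Y = t1)
  (hthT : forall z, theta (iota z) = tpow z 4)
  (hpsi : hom_to_T psi) (hpsX : psi X = tmi) (hpsY : psi Y = t1)
  (hpsT : forall z, psi (iota z) = t1) :
  let chi := fun g => tmul (tpow (theta g) (2 ^ m)) (tpow (psi g) q) in
  let K := fun g => chi g = t1 in
  (forall g, K g <->
     gen (fun h => h = gmul (iota (expi (PI * INR q / 2 ^ (m + 3)))) X \/ h = Y) g) /\
  (forall (P : group) (A B : P), is_Hmq m q P A B ->
     exists phi : G -> P,
       (forall g h, K g -> K h -> phi (gmul g h) = gmul (phi g) (phi h)) /\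
       (forall g h, K g -> K h -> phi g = phi h -> g = h) /\
       (forall p, exists g, K g /\ phi g = p)).
Proof.
  intros chi0 K.
  assert (HKW : forall g, K g <-> W m q G X Y iota g).
  { intro g. split.
    - exact (K_W m q hq G X Y iota hG theta psi htheta hthX hthY hthT hpsi hpsX hpsY hpsT g).
    - exact (W_K m q hq G X Y iota theta psi htheta hthX hthY hthT hpsi hpsX hpsY hpsT g). }
  split.
  - intro g. rewrite HKW. reflexivity.
  - intros P A B hP.
    destruct (proj2 (proj2 hG) _ _ _ _ (rels' m q hq P A B hP)) as [Phi [PhiM [PhiX [PhiY PhiT]]]].
    destruct (proj2 (proj2 hP) G _ Y (relsG m q hq G X Y iota hG)) as [h [hM [hA hB]]].
    exists (phi m q hq G P A B hP Phi). split; [|split].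
    + intros g1 g2 H1 H2. apply HKW in H1. apply HKW in H2.
      exact (phiM m q hq G X Y iota P A B hP Phi PhiM PhiX PhiY PhiT g1 g2 H1 H2).
    + intros g1 g2 H1 H2 E. apply HKW in H1. apply HKW in H2.
      rewrite <- (h_phi m q hq G X Y iota P A B hP Phi PhiM PhiX PhiY PhiT h hM hA hB g1 H1).
      rewrite <- (h_phi m q hq G X Y iota P A B hP Phi PhiM PhiX PhiY PhiT h hM hA hB g2 H2).
      rewrite E. reflexivity.
    + intro p. destruct (phi_surj m q hq G X Y iota P A B hP Phi PhiM PhiX PhiY PhiT p) as [g [Hg Hp]].
      exists g. split; auto. apply HKW; auto.
Qed.
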